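(* Let $d\ge 1$. For every $R>0$ there exists a constant $C_R>0$ such that $\mu(Q(x,2r)) \le C_R\,\mu(Q(x,r))$ for all $x\in\mathbb{R}^d_+$ and $0<r\le R$. The same holds with $Q$ replaced by $B$ or by $D$.
   Context: $\mathbb{R}^d_+=(0,\infty)^d$ and $\mu$ is the measure on $\mathbb{R}^d_+$ with density $\exp(-|x|_1)$, $|x|_1=\sum_i|x_i|$. For $x\in\mathbb{R}^d_+$, $r>0$: $D(x,r)=\{y\in\mathbb{R}^d_+:|x-y|_1<r\}$, $B(x,r)=\{y\in\mathbb{R}^d_+:|x-y|_2<r\}$, $Q(x,r)=\{y\in\mathbb{R}^d_+:|x-y|_\infty<r\}$, with $|\cdot|_2$ Euclidean norm and $|\cdot|_\infty$ the max norm. *)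

(* Defs.v *)
From HB Require Import structures.
From mathcomp Require Import all_boot all_order all_algebra.
From mathcomp Require Import all_classical all_reals all_analysis.
Set Implicit Arguments. Unset Strict Implicit. Unset Printing Implicit Defensive.
Import Order.TTheory GRing.Theory Num.Theory.
Local Open Scope classical_set_scope.
Local Open Scope ring_scope.

Section defs.
Variable R : realType.

Definition Rplus (d : nat) : set (d.-tuple R) :=
  [set x | forall i : 'I_d, 0 < tnth x i].

Definition norm1 d (x : d.-tuple R) : R := \sum_(i < d) `|tnth x i|.
Definition norm2 d (x : d.-tuple R) : R := Num.sqrt (\sum_(i < d) (tnth x i) ^+ 2).
Definition normoo d (x : d.-tuple R) : R := \big[Num.max/0]_(i < d) `|tnth x i|.

Definition tsub d (x y : d.-tuple R) : d.-tuple R :=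
  [tuple tnth x i - tnth y i | i < d].

Definition Dball d (x : d.-tuple R) (r : R) : set (d.-tuple R) :=
  [set y | Rplus y /\ norm1 (tsub x y) < r].
Definition Bball d (x : d.-tuple R) (r : R) : set (d.-tuple R) :=
  [set y | Rplus y /\ norm2 (tsub x y) < r].
Definition Qball d (x : d.-tuple R) (r : R) : set (d.-tuple R) :=
  [set y | Rplus y /\ normoo (tsub x y) < r].

(* The measure mu on R^d_+ with density exp(-|x|_1) w.r.t. Lebesgue measure,
   defined by iterated Lebesgue integration (Tonelli):
   mu_0 A = 1 if the empty tuple is in A, 0 otherwise;
   mu_{d+1} A = int_{t in (0,oo)} e^{-t} mu_d {y | (t :: y) in A} dt. *)
Fixpoint mu (d : nat) : set (d.-tuple R) -> \bar R :=
  match d with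
  | 0 => fun A => (\1_A [tuple] : R)%:E
  | d'.+1 => fun A =>
      (\int[lebesgue_measure]_(t in `]0%R, +oo[)
         ((expR (- t))%:E * mu [set y | A (cons_tuple t y)]))%E
  end.

Definition local_doubling d (ball : d.-tuple R -> R -> set (d.-tuple R)) :=
  forall Rad : R, 0 < Rad ->
    exists C : R, 0 < C /\
      forall x : d.-tuple R, Rplus x -> forall r : R, (0 < r)%R -> (r <= Rad)%R ->
        (mu (ball x (2 * r)%R) <= C%:E * mu (ball x r))%E.

End defs.

(* Main.v *)
Require Import Defs.
From HB Require Import structures.
From mathcomp Require Import all_boot all_order all_algebra.
From mathcomp Require Import all_classical all_reals all_analysis.
From mathcomp Require Import measurable_realfun.
From mathcomp Require Import lra ring.
Import Order.TTheory GRing.Theory Num.Theory.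
Local Open Scope classical_set_scope.
Local Open Scope ring_scope.

Section S.
Variable R : realType.
Local Open Scope ereal_scope.

Lemma int_le_gen (D : set R) (f g : R -> \bar R) :
  (forall x, D x -> 0 <= f x) -> (forall x, D x -> f x <= g x) ->
  \int[@lebesgue_measure R]_(x in D) f x <= \int[@lebesgue_measure R]_(x in D) g x.
Proof.
move=> f0 fg.
have g0 : forall x, D x -> 0 <= g x by move=> x Dx; exact: le_trans (f0 x Dx) (fg x Dx).
rewrite !ge0_integralE//.
apply: ereal_sup_le => _ [h /= hf <-]; exists h => //= x.
apply: le_trans (hf x) _; rewrite /patch; case: ifP => // /set_mem Dx.
exact: fg.
Qed.

Lemma mu_ge0 d (A : set (d.-tuple R)) : 0 <= mu A.
Proof.
elim: d A => [|d IH] A /=; first by rewrite lee_fin indicE; case: (_ \in _).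
apply: integral_ge0 => t _; apply: mule_ge0 => //; rewrite lee_fin expR_ge0 //.
Qed.

Lemma mu_mono d (A B : set (d.-tuple R)) : A `<=` B -> mu A <= mu B.
Proof.
elim: d A B => [|d IH] A B AB /=.
  rewrite lee_fin !indicE; case: (boolP (_ \in A)) => //.
  by move/set_mem/AB/mem_set => ->.
apply: int_le_gen => t _.
  by apply: mule_ge0; [rewrite lee_fin expR_ge0|exact: mu_ge0].
apply: lee_wpmul2l; first by rewrite lee_fin expR_ge0.
by apply: IH => y /= /AB.
Qed.

Lemma mu_set0 d : mu (@set0 (d.-tuple R)) = 0.
Proof.
elim: d => [|d IH] /=; first by rewrite indicE in_set0.
rewrite (eq_integral (fun _ => 0)) ?integral0// => t _.
by rewrite (_ : [set y | _] = set0) ?IH ?mule0.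
Qed.

Definition box d (A : nat -> set R) : set (d.-tuple R) :=
  [set y | forall i : 'I_d, A i (tnth y i)].

Definition nu (A : set R) : \bar R :=
  \int[@lebesgue_measure R]_(t in `]0%R, +oo[) ((expR (- t) * \1_A t)%:E).

Lemma nu_ge0 A : 0 <= nu A.
Proof.
apply: integral_ge0 => t _; rewrite lee_fin mulr_ge0 // ?expR_ge0 //.
Qed.

Lemma box_step d (A : nat -> set R) t :
  mu [set y : d.-tuple R | box d.+1 A (cons_tuple t y)] =
  (\1_(A 0%N) t)%:E * mu (box d (fun n => A n.+1)).
Proof.
rewrite indicE; case: (boolP (t \in A 0%N)) => tA.
  rewrite mul1e; congr mu; apply/seteqP; split => y /= H.
    move=> j; have := H (@Ordinal d.+1 j.+1 (ltn_ord j)).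
    by rewrite !(tnth_nth 0%R).
  move=> [[|k] hk]; rewrite (tnth_nth 0%R) /=; first exact: set_mem.
  have hk' : (k < d)%N by rewrite -ltnS.
  by have := H (Ordinal hk'); rewrite (tnth_nth 0%R).
rewrite mul0e (_ : [set y | _] = set0) ?mu_set0 //.
apply/seteqP; split => y //= H; move: tA; rewrite (_ : t = tnth (cons_tuple t y) ord0).
  by rewrite (mem_set (H ord0)).
by rewrite (tnth_nth 0%R).
Qed.

Lemma mu_box_step d (A : nat -> set R) : measurable (A 0%N) ->
  mu (box d.+1 A) = nu (A 0%N) * mu (box d (fun n => A n.+1)).
Proof.
move=> mA /=.
transitivity (\int[@lebesgue_measure R]_(t in `]0%R, +oo[)
  ((expR (- t) * \1_(A 0%N) t)%:E * mu (box d (fun n => A n.+1)))).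
  by apply: eq_integral => t _; rewrite box_step muleA EFinM.
rewrite ge0_integralZr //; last exact: mu_ge0.
- apply/measurable_EFinP; apply: measurable_funM; last exact: measurable_indic.
  by apply: measurableT_comp.
Qed.

Lemma box_cmp d (A B : nat -> set R) (c : R) : (0 <= c)%R ->
  (forall n, measurable (A n)) -> (forall n, measurable (B n)) ->
  (forall n, nu (A n) <= c%:E * nu (B n)) ->
  mu (box d A) <= (c ^+ d)%:E * mu (box d B).
Proof.
move=> c0; elim: d A B => [|d IH] A B mA mB AB.
  rewrite expr0 mul1e (_ : box 0 A = box 0 B) //.
  by apply/seteqP; split => y _ [].
rewrite !mu_box_step // exprS EFinM.
rewrite -muleA (muleCA ((c ^+ d)%:E)) muleA.
apply: lee_pmul.
- exact: nu_ge0.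
- exact: mu_ge0.
- exact: AB.
- by apply: IH => n.
Qed.

Lemma leb_itv (a b : R) : (a <= b)%R ->
  (@lebesgue_measure R) `]a, b[ = (b - a)%:E.
Proof.
move=> ab; rewrite lebesgue_measure_itv /=.
case: ltP => [//|]; rewrite ?lte_fin ?lee_fin => ba.
have -> : b = a by apply/eqP; rewrite eq_le ab ba.
by rewrite subrr.
Qed.

Lemma int_box (a b k : R) : (0 <= a)%R -> (a <= b)%R -> (0 <= k)%R ->
  \int[@lebesgue_measure R]_(t in `]0%R, +oo[) ((k * \1_(`]a, b[ : set R) t)%:E)
  = (k * (b - a))%:E.
Proof.
move=> a0 ab k0.
under eq_integral do rewrite EFinM.
rewrite ge0_integralZl_EFin //. all: try (by move=> t _; rewrite lee_fin; rewrite indicE; case: (_ \in _)). 2: by apply/measurable_EFinP; exact: measurable_indic.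

rewrite integral_indic // setIidl.
  by rewrite EFinM; congr (_ * _); exact: leb_itv.
move=> t /=; rewrite !in_itv /= => /andP[ha hb]; rewrite andbT.
exact: le_lt_trans a0 ha.
Qed.

Lemma indic_ge0 (A : set R) t : (0 <= \1_A t :> R)%R.
Proof. by rewrite indicE; case: (_ \in _). Qed.

Lemma nu_le (A : set R) (a b : R) : (0 <= a)%R -> (a <= b)%R ->
  (forall t, (0 < t)%R -> A t -> (a < t < b)%R) ->
  nu A <= (expR (- a) * (b - a))%:E.
Proof.
move=> a0 ab H; rewrite -int_box // ?expR_ge0 //.
apply: int_le_gen => t; rewrite /= in_itv /= andbT => t0.
  by rewrite lee_fin mulr_ge0 ?expR_ge0 ?indic_ge0.
rewrite lee_fin !indicE; case: (boolP (t \in A)) => tA; last first.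
  by rewrite mulr0 mulr_ge0 ?expR_ge0 //; case: (_ \in _).
have /andP[ha hb] := H t t0 (set_mem tA).
rewrite (_ : (t \in _) = true); last by apply/mem_set; rewrite /= in_itv /= ha hb.
by rewrite !mulr1 ler_expR lerN2 ltW.
Qed.

Lemma nu_ge (A : set R) (a b : R) : (0 <= a)%R -> (a <= b)%R ->
  (forall t, (a < t < b)%R -> A t) ->
  (expR (- b) * (b - a))%:E <= nu A.
Proof.
move=> a0 ab H; rewrite -int_box // ?expR_ge0 //.
apply: int_le_gen => t; rewrite /= in_itv /= andbT => t0.
  by rewrite lee_fin mulr_ge0 ?expR_ge0 ?indic_ge0.
rewrite lee_fin !indicE; case: (boolP (t \in _)) => tab; last first.
  by rewrite mulr0 mulr_ge0 ?expR_ge0 //; case: (_ \in _).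
move: (tab); rewrite inE /= in_itv /= => /andP[ha hb].
by rewrite (mem_set (H t _)) ?ha ?hb // !mulr1 ler_expR lerN2 ltW.
Qed.

Definition J (x s : R) : set R := [set t | (0 < t)%R /\ (`|x - t| < s)%R].

Lemma J_meas x s : measurable (J x s).
Proof.
rewrite (_ : J x s = `]0%R, +oo[ `&` `](x - s)%R, (x + s)%R[); last first.
  apply/seteqP; split => t /=; rewrite /J /= !in_itv /= ?andbT ltr_distlC.
    by case=> -> ->.
  by case=> -> ->.
by apply: measurableI; exact: measurable_itv.
Qed.

Lemma nu_J (x s lam M : R) : (0 < x)%R -> (0 < s)%R -> (1 <= lam)%R -> (lam * s <= M)%R ->
  nu (J x (lam * s)) <= (2 * lam * expR M)%:E * nu (J x s).
Proof.
move=> x0 s0 l1 lsM.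
have sls : (s <= lam * s)%R by nra.
pose aL := if (0 <= x - lam * s)%R then (x - lam * s)%R else 0%R.
pose a1 := if (0 <= x - s)%R then (x - s)%R else 0%R.
have [aL0 [aLx aLe]] : [/\ (0 <= aL)%R, (x - lam * s <= aL)%R & (aL = 0%R \/ aL = (x - lam * s)%R)].
  by rewrite /aL; case: ifPn => h; [split => //; right|split => //; [lra|left]].
have [a10 [a1x a1e]] : [/\ (0 <= a1)%R, (x - s <= a1)%R & (a1 = 0%R \/ a1 = (x - s)%R)].
  by rewrite /a1; case: ifPn => h; [split => //; right|split => //; [lra|left]].
have a1lex : (a1 <= x)%R by case: a1e => ->; lra.
have up := @nu_le (J x (lam * s)) aL (x + lam * s) aL0 ltac:(lra).
have lo := @nu_ge (J x s) a1 (a1 + s) a10 ltac:(lra).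
apply: le_trans (up _) _.
  move=> t t0 [_]; rewrite ltr_distlC => /andP[h1 h2].
  apply/andP; split => //; case: aLe => ->; lra.
apply: le_trans; last first.
  apply: lee_wpmul2l; last first.
    apply: lo => t /andP[h1 h2]; split; first lra.
    rewrite ltr_distlC; apply/andP; split; lra.
  rewrite lee_fin; apply: mulr_ge0; [lra| exact: expR_ge0].
rewrite -EFinM lee_fin.
have E : (expR (- aL) <= expR M * expR (- (a1 + s)))%R.
  rewrite -expRD ler_expR; case: a1e => ->; lra.
have e0 := expR_ge0 (- aL).
have e1 := expR_ge0 (- (a1 + s)).
have eM := expR_ge0 M.
set E1 := expR (- aL) in E e0 *.
set E2 := expR (- (a1 + s)) in E e1 *.
set E3 := expR M in E eM *.
have -> : (a1 + s - a1 = s)%R by lra.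
nra.
Qed.
End S.

Section S2.
Variable R : realType.

Lemma tsubE d (x y : d.-tuple R) i : tnth (tsub x y) i = tnth x i - tnth y i.
Proof. by rewrite /tsub tnth_mktuple. Qed.

Lemma Qball_box d (x : d.-tuple R) r : 0 < r ->
  Qball x r = box R d (fun n => J R (nth 1 x n) r).
Proof.
move=> r0; apply/seteqP; split => y /=.
  case=> Hp /bigmax_ltP [_ H] i; split; first exact: Hp.
  by have := H i isT; rewrite tsubE (tnth_nth 1).
move=> H; split; first by move=> i; case: (H i).
apply/bigmax_ltP; split => // i _; rewrite tsubE (tnth_nth 1).
by case: (H i).
Qed.

Lemma normoo_ge d (z : d.-tuple R) i : `|tnth z i| <= normoo z.
Proof. exact: le_bigmax. Qed.

Lemma normoo_ge0 d (z : d.-tuple R) : 0 <= normoo z.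
Proof. by apply: bigmax_ge_id. Qed.

Lemma Dball_sub d (x : d.-tuple R) s : Dball x s `<=` Qball x s.
Proof.
move=> y [Hp H]; split => //.
have s0 : 0 < s by apply: le_lt_trans H; apply: sumr_ge0 => i _.
apply/bigmax_ltP; split => // i _; apply: le_lt_trans H.
rewrite /norm1 (bigD1 i) //= lerDl; exact: sumr_ge0.
Qed.

Lemma Bball_sub d (x : d.-tuple R) s : Bball x s `<=` Qball x s.
Proof.
move=> y [Hp H]; split => //.
have s0 : 0 < s by apply: le_lt_trans H; exact: sqrtr_ge0.
apply/bigmax_ltP; split => // i _; apply: le_lt_trans H.
rewrite /norm2 -sqrtr_sqr ler_sqrt; last by apply: sumr_ge0 => j _; exact: sqr_ge0.
rewrite (bigD1 i) //= lerDl; apply: sumr_ge0 => j _; exact: sqr_ge0.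
Qed.

Lemma Qball_subQ d (x : d.-tuple R) s r : s <= r -> Qball x s `<=` Qball x r.
Proof. by move=> sr y [Hp H]; split => //; apply: lt_le_trans sr. Qed.

Lemma Qball_subD d (x : d.-tuple R) r : (1 <= d)%N -> 0 < r ->
  Qball x (r / d%:R) `<=` Dball x r.
Proof.
move=> d1 r0 y [Hp H]; split => //.
have d0 : 0 < d%:R :> R by rewrite ltr0n.
apply: (@le_lt_trans _ _ (d%:R * normoo (tsub x y))).
  apply: le_trans.
    apply: (@ler_sum _ _ _ _ _ (fun _ => normoo (tsub x y))) => i _.
    exact: normoo_ge.
  by rewrite sumr_const card_ord mulr_natl.
by rewrite -ltr_pdivlMl // mulrC.
Qed.

Lemma Qball_subB d (x : d.-tuple R) r : (1 <= d)%N -> 0 < r ->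
  Qball x (r / d%:R) `<=` Bball x r.
Proof.
move=> d1 r0 y [Hp H]; split => //.
have d1' : 1 <= d%:R :> R by rewrite ler1n.
set m := normoo (tsub x y) in H.
have m0 : 0 <= m := normoo_ge0 _ _.
have hm : m < r.
  apply: lt_le_trans H _; rewrite ler_pdivrMr ?ltr0n //; nra.
rewrite /norm2 -(ger0_norm (ltW r0)) -sqrtr_sqr ltr_sqrt ?exprn_gt0 //.
apply: (@le_lt_trans _ _ (d%:R * m ^+ 2)).
  apply: le_trans.
    apply: (@ler_sum _ _ _ _ _ (fun _ => m ^+ 2)) => i _.
    rewrite -real_normK ?num_real //.
    by rewrite lerXn2r ?nnegrE ?normoo_ge.
  by rewrite sumr_const card_ord mulr_natl.
have : m * d%:R < r by rewrite -ltr_pdivlMr ?ltr0n.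
nra.
Qed.
End S2.

Section S3.
Variable R : realType.

Lemma doubling_of d (ball : d.-tuple R -> R -> set (d.-tuple R)) : (1 <= d)%N ->
  (forall x s, 0 < s -> ball x s `<=` Qball x s) ->
  (forall x r, 0 < r -> Qball x (r / d%:R) `<=` ball x r) ->
  local_doubling ball.
Proof.
move=> d1 sub1 sub2 Rad Rad0.
have d0 : 0 < d%:R :> R by rewrite ltr0n.
pose lam : R := 2 * d%:R.
have d1' : 1 <= d%:R :> R by rewrite ler1n.
have lam1 : 1 <= lam by rewrite /lam; lra.
pose c : R := 2 * lam * expR (2 * Rad).
have c0 : 0 < c by rewrite /c; apply: mulr_gt0; [lra|exact: expR_gt0].
exists (c ^+ d); split; first exact: exprn_gt0.
move=> x xp r r0 rR.
pose s := r / d%:R.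
have s0 : 0 < s by rewrite divr_gt0.
have e2r : 2 * r = lam * s by rewrite /lam /s; field; rewrite gt_eqF.
have xpos n : 0 < nth 1 x n.
  case: (ltnP n d) => h; last by rewrite nth_default ?size_tuple.
  by have := xp (Ordinal h); rewrite (tnth_nth 1).
apply: (le_trans (mu_mono _ _ _ _ (sub1 x (2 * r) ltac:(lra)))).
apply: le_trans; last first.
  apply: lee_wpmul2l; first by rewrite lee_fin; exact: ltW (exprn_gt0 _ c0).
  exact: (mu_mono _ _ _ _ (sub2 x r r0)).
rewrite e2r (Qball_box _ _ _ (lam * s)) ?Qball_box //; last exact: mulr_gt0 (lt_le_trans ltr01 lam1) s0.
apply: box_cmp; first exact: ltW.
- move=> n; exact: J_meas.
- move=> n; exact: J_meas.
- move=> n; apply: nu_J => //; lra.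
Qed.
End S3.

Theorem lemma2p2 (R : realType) (d : nat) : (1 <= d)%N ->
  local_doubling (@Qball R d) /\ local_doubling (@Bball R d) /\
  local_doubling (@Dball R d).
Proof.
move=> d1; split; [|split]; apply: doubling_of => // x.
- by move=> s s0; apply: Qball_subQ.
- move=> r r0; apply: Qball_subQ; rewrite ler_pdivrMr ?ltr0n //.
  have : 1 <= d%:R :> R by rewrite ler1n.
  by move=> h; nra.
- by move=> s s0; apply: Bball_sub.
- by move=> r r0; apply: Qball_subB.
- by move=> s s0; apply: Dball_sub.
- by move=> r r0; apply: Qball_subD.
Qed.
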